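(* Let $\phi:\mathbb{R}\to\mathbb{R}$ be a convex function and suppose there is a set $I\subseteq[0,1]$ and a strictly increasing function $h:I\to\mathbb{R}$ such that for every $\eta\in[0,1]$ the set $\arg\min_{\alpha\in\mathbb{R}}\{\eta\,\phi(\alpha)+(1-\eta)\phi(-\alpha)\}$ equals $\{h(\eta)\}$ if $\eta\in I$ and is empty if $\eta\notin I$. Then the one-vs-all loss $L^{\mathrm{OVA}}_\phi$ is top-$k$ calibrated for every $1\le k\le m$.
   Context: Classes $\mathcal{Y}=\{1,\dots,m\}$, $m\ge 2$. Top-$k$ error: for $y\in\mathcal{Y}$, $g\in\mathbb{R}^m$, $\mathrm{err}_k(y,g)=1$ if $|\{j\ne y: g_j\ge g_y\}|\ge k$ and $0$ otherwise. A loss $L:\mathcal{Y}\times\mathbb{R}^m\to\mathbb{R}$ is called top-$k$ calibrated if for every probability vector $p\in\mathbb{R}^m$ (playing the role of $(\Pr(Y=y\mid X=x))_y$) whose coordinates are pairwise distinct, $\arg\min_{g\in\mathbb{R}^m}\sum_y p_y L(y,g)\subseteq\arg\min_{g\in\mathbb{R}^m}\sum_y p_y\,\mathrm{err}_k(y,g)$ (the left set may be empty). For a binary margin loss $\phi:\mathbb{R}\to\mathbb{R}$, the one-vs-all (OVA) reduction corresponds to the multiclass loss $L^{\mathrm{OVA}}_\phi(y,g)=\phi(g_y)+\sum_{j\ne y}\phi(-g_j)$ (class $j$ is trained as positive versus all others as negative). *)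

(* Defs.v *)
(* real numbers are modelled by an arbitrary realFieldType. *)
From HB Require Import structures.
From mathcomp Require Import all_boot all_order all_algebra.
Set Implicit Arguments. Unset Strict Implicit. Unset Printing Implicit Defensive.
Import Order.TTheory GRing.Theory Num.Theory.
Local Open Scope ring_scope.

Definition is_argmin (T : Type) (R : realFieldType) (F : T -> R) (x : T) : Prop :=
  forall z : T, F x <= F z.

Definition err_k (R : realFieldType) (m k : nat) (y : 'I_m) (g : 'I_m -> R) : R :=
  if (k <= #|[set j : 'I_m | (j != y) && (g y <= g j)%R]|)%N then 1 else 0.

Definition topk_calibrated (R : realFieldType) (m k : nat)
    (L : 'I_m -> ('I_m -> R) -> R) : Prop :=
  forall p : 'I_m -> R,
    (forall y, 0 <= p y) -> \sum_(y < m) p y = 1 -> injective p ->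
    forall g : 'I_m -> R,
      is_argmin (fun g' => \sum_(y < m) p y * L y g') g ->
      is_argmin (fun g' => \sum_(y < m) p y * err_k k y g') g.

Definition ova_loss (R : realFieldType) (m : nat) (phi : R -> R)
    (y : 'I_m) (g : 'I_m -> R) : R :=
  phi (g y) + \sum_(j < m | j != y) phi (- g j).

Definition convex_fun (R : realFieldType) (phi : R -> R) : Prop :=
  forall x y t : R, 0 <= t -> t <= 1 ->
    phi (t * x + (1 - t) * y) <= t * phi x + (1 - t) * phi y.

(* Main.v *)
Require Import Defs.
From HB Require Import structures.
From mathcomp Require Import all_boot all_order all_algebra zify.
Import Order.TTheory GRing.Theory Num.Theory.
Local Open Scope ring_scope.

Lemma ova_sum (R : realFieldType) m (phi : R -> R) (p g : 'I_m -> R) :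
  \sum_y p y = 1 ->
  \sum_(y < m) p y * ova_loss phi y g =
  \sum_(j < m) (p j * phi (g j) + (1 - p j) * phi (- g j)).
Proof.
move=> Hp; rewrite /ova_loss.
have E y : \sum_(j < m | j != y) phi (- g j) = \sum_j phi (- g j) - phi (- g y).
  by rewrite [\sum_j _](bigD1 y) //= addrC addrK.
under eq_bigr => y _ do rewrite E mulrDr mulrBr.
rewrite !big_split /= -mulr_suml Hp mul1r sumrN.
congr (_ + _); rewrite -sumrB; apply: eq_bigr => j _.
by rewrite mulrBl mul1r.
Qed.

Lemma coord_opt (R : realFieldType) m (c : 'I_m -> R -> R) (g : 'I_m -> R) :
  (forall g' : 'I_m -> R, \sum_j c j (g j) <= \sum_j c j (g' j)) ->
  forall j a, c j (g j) <= c j a.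
Proof.
move=> H j a; have := H (fun i => if i == j then a else g i).
rewrite (bigD1 j) //= [X in _ <= X](bigD1 j) //= eqxx.
rewrite [X in _ <= _ + X](eq_bigr (fun i => c i (g i))) ?lerD2r //.
by move=> i /negPf ->.
Qed.
Lemma topk_opt (R : realFieldType) m k (p g g' : 'I_m -> R) :
  (1 <= k)%N -> (k <= m)%N -> (forall y, 0 <= p y) -> injective p ->
  (forall x y, p x < p y -> g x < g y) ->
  \sum_y p y * err_k k y g <= \sum_y p y * err_k k y g'.
Proof.
move=> k1 km p0 pinj gmon.
set N := fun y => #|[set j : 'I_m | p y < p j]|.
set N' := fun y => #|[set j : 'I_m | (j != y) && (g' y <= g' j)]|.
set A := [set y | (k <= N y)%N].
set B := [set y | (k <= N' y)%N].
have eA y : err_k k y g = if y \in A then 1 else 0.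
  rewrite /err_k inE /N.
  suff -> : [set j | (j != y) && (g y <= g j)] = [set j | p y < p j] by [].
  apply/setP => j; rewrite !inE.
  have [ej|nej] := eqVneq j y; first by rewrite ej ltxx.
  have npe : p y != p j by apply: contra nej => /eqP /pinj ->.
  have [lt|gt|eq] := ltgtP (p y) (p j).
  - by rewrite ltW // gmon.
  - by rewrite leNgt gmon.
  - by rewrite eq eqxx in npe.
have eB y : err_k k y g' = if y \in B then 1 else 0 by rewrite /err_k inE.
have C1 : (#|~: B| <= k)%N.
  have [y0 y0B|] := pickP (mem (~: B)); last first.
    by move=> H; rewrite (eq_card0 H).
  case: (arg_minP g' y0B) => x xB Hx.
  have {}xB : x \in ~: B by [].
  rewrite (cardsD1 x) xB add1n.
  have : (#|~: B :\ x| <= N' x)%N.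
    apply: subset_leq_card; apply/subsetP => j; rewrite !inE => /andP [-> jB] /=.
    have jB' : j \in ~: B by rewrite !inE.
    exact: Hx jB'.
  by move: xB; rewrite !inE -ltnNge => xB H; apply: leq_ltn_trans H xB.
have C3 x y : x \notin A -> y \in A -> p y < p x.
  move=> xA yA; rewrite ltNge; apply/negP => le_xy.
  have nxy : x != y by apply: contraNneq xA => ->.
  have lt_xy : p x < p y.
    by rewrite lt_neqAle le_xy andbT; apply: contra nxy => /eqP /pinj ->.
  move: xA yA; rewrite !inE -ltnNge => xA yA.
  have : (#|y |: [set j | (p y < p j)%R]| <= N x)%N.
    apply: subset_leq_card; apply/subsetP => j; rewrite !inE.
    by case/orP => [/eqP -> //|]; apply: lt_trans.
  rewrite cardsU1 inE ltxx /= add1n => H.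
  by have := ltn_trans (leq_ltn_trans yA H) xA; rewrite ltnn.
have C2 : (k <= #|~: A|)%N.
  rewrite leqNgt; apply/negP => small.
  have [y0 y0A|] := pickP (mem A); last first.
    move=> H; have := cardsC A; rewrite (eq_card0 H) add0n card_ord => E.
    by move: small; rewrite E ltnNge km.
  case: (arg_maxP p y0A) => y yA Hy.
  have {}yA : y \in A by [].
  have : (N y <= #|~: A|)%N.
    apply: subset_leq_card; apply/subsetP => j; rewrite !inE => lt.
    apply/negP => jA.
    have jA' : j \in A by rewrite inE.
    by have := Hy j jA'; rewrite /= leNgt lt.
  move: yA; rewrite inE => yA H.
  have := leq_ltn_trans (leq_trans yA H) small; by rewrite ltnn.
have [x0 x0A|] := pickP (mem (~: A)); last first.
  by move=> H; move: C2; rewrite (eq_card0 H) leqn0 => /eqP k0; rewrite k0 in k1.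
case: (arg_minP p x0A) => x xA Hx.
have {}xA : x \in ~: A by [].
set t := p x.
have cardAB : (#|A| <= #|B|)%N.
  have := cardsC A; have := cardsC B; rewrite card_ord.
  move=> EB EA; move: C1 C2; lia.
under eq_bigr => y _ do rewrite eA.
under [X in _ <= X]eq_bigr => y _ do rewrite eB.
rewrite -subr_le0 -sumrB.
apply: (le_trans (y := \sum_y t * ((if y \in A then 1 else 0) - (if y \in B then 1 else 0)))).
  apply: ler_sum => y _.
  case yA: (y \in A); case yB: (y \in B);
    rewrite ?mulr1 ?mulr0 ?subr0 ?sub0r ?subrr ?mulr0 ?lexx //.
  - by rewrite mulr1; apply: ltW; apply: C3 yA; move: xA; rewrite inE.
  - have yA' : y \in ~: A by rewrite inE yA.
    by rewrite mulrN1 lerN2; apply: Hx yA'.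
rewrite -mulr_sumr; apply: mulr_ge0_le0; first exact: p0.
rewrite sumrB -!big_mkcond /= !sumr_const subr_le0 ler_nat.
by [].
Qed.

Theorem lemma2 (R : realFieldType) (m : nat) (phi : R -> R)
    (I : R -> Prop) (h : R -> R) :
  (2 <= m)%N ->
  convex_fun phi ->
  (forall eta, I eta -> 0 <= eta /\ eta <= 1) ->
  (forall a b, I a -> I b -> a < b -> h a < h b) ->
  (forall eta, 0 <= eta -> eta <= 1 ->
     forall a : R,
       is_argmin (fun a' => eta * phi a' + (1 - eta) * phi (- a')) a <->
       (I eta /\ a = h eta)) ->
  forall k : nat, (1 <= k)%N -> (k <= m)%N ->
    @topk_calibrated R m k (@ova_loss R m phi).
Proof.
move=> m2 _ Ibd hmon Harg k k1 km p p0 p1 pinj g Hg g'.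
have Hopt : forall j a, p j * phi (g j) + (1 - p j) * phi (- g j)
                        <= p j * phi a + (1 - p j) * phi (- a).
  apply: (@coord_opt R m (fun j a => p j * phi a + (1 - p j) * phi (- a)) g) => g''.
  by have := Hg g''; rewrite /= !ova_sum.
have Hj j : I (p j) /\ g j = h (p j).
  have pj1 : p j <= 1.
    rewrite -p1 (bigD1 j) //= lerDl; apply: sumr_ge0 => i _; exact: p0.
  apply/(Harg (p j) (p0 j) pj1 (g j)) => a; exact: Hopt.
apply: topk_opt => //.
move=> x y lt; have [Ix ->] := Hj x; have [Iy ->] := Hj y; exact: hmon.
Qed.
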